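(* Let $M$ be a multigraph with $n$ vertices. Then $M$ is the double competition multigraph of a reflexive digraph if and only if there exist an ordering $(v_1,\ldots,v_n)$ of the vertices of $M$ and a double indexed edge clique partition $\{S_{ij}\mid i,j\in[n]\}$ of $M$ such that the following conditions hold: (I) for any $i,j\in[n]$, if $|A_i\cap B_j|\ge 2$, then $A_i\cap B_j=S_{ij}$; (III) for any $i\in[n]$, $v_i\in S_{i*}\cup S_{*i}$, where $A_i = S_{i*}\cup T^+_i$, $S_{i*} := \bigcup_{p\in[n]} S_{ip}$, $T^+_i := \{v_b \mid a,b\in[n],\ v_i\in S_{ab}\}$, and $B_j = S_{*j}\cup T^-_j$, $S_{*j} := \bigcup_{q\in[n]} S_{qj}$, $T^-_j := \{v_a \mid a,b\in[n],\ v_j\in S_{ab}\}$.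
   Context: A digraph $D$ is a pair $(V(D),A(D))$ with $A(D)$ a set of ordered pairs of vertices (arcs); an arc $(v,v)$ is a loop, and $D$ is reflexive if $(v,v)\in A(D)$ for every $v\in V(D)$. $N^+_D(x)=\{v\mid (x,v)\in A(D)\}$ and $N^-_D(x)=\{v\mid (v,x)\in A(D)\}$. A multigraph $M$ (without loops) is a vertex set $V(M)$ together with a function $m_M$ assigning to each unordered pair $\{x,y\}$ of distinct vertices a nonnegative integer, the number of edges between $x$ and $y$. The double competition multigraph of a digraph $D$ is the multigraph $M$ with $V(M)=V(D)$ and $m_M(\{x,y\}) = |N^+_D(x)\cap N^+_D(y)|\cdot|N^-_D(x)\cap N^-_D(y)|$ for distinct $x,y$. A clique of $M$ is a set of vertices that are pairwise adjacent (i.e. $m_M\ge 1$ on every pair of distinct elements); the empty set and singletons count as cliques. An edge clique partition of $M$ is a family (multiset) $\mathcal{F}$ of cliques of $M$ such that any two distinct vertices $x,y$ are contained in exactly $m_M(\{x,y\})$ members of $\mathcal{F}$; a double indexed edge clique partition $\{S_{ij}\mid i,j\in[n]\}$ is such a family indexed by pairs $(i,j)\in[n]\times[n]$ (members may be empty). $[n]=\{1,\ldots,n\}$. *)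

(* Defs.v *)
From mathcomp Require Import all_boot.
Set Implicit Arguments. Unset Strict Implicit. Unset Printing Implicit Defensive.

Definition outN (V : finType) (D : rel V) (x : V) : {set V} := [set y | D x y].
Definition inN (V : finType) (D : rel V) (x : V) : {set V} := [set y | D y x].

Definition reflexive_digraph (V : finType) (D : rel V) : Prop := forall v, D v v.

(* A multigraph on V is given by m : V -> V -> nat, where m x y (x != y) is the
   number of edges between x and y; it is required to be symmetric, and the
   diagonal values are irrelevant (there are no loops). *)
Definition double_competition_multigraph (V : finType) (D : rel V)
  (m : V -> V -> nat) : Prop :=
  forall x y, x != y ->
    m x y = #|outN D x :&: outN D y| * #|inN D x :&: inN D y|.

Definition is_dcm_of_reflexive_digraph (V : finType) (m : V -> V -> nat) : Prop :=
  exists D : rel V, reflexive_digraph D /\ double_competition_multigraph D m.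

Definition is_clique (V : finType) (m : V -> V -> nat) (C : {set V}) : Prop :=
  forall x y, x \in C -> y \in C -> x != y -> 1 <= m x y.

Definition double_indexed_ecp (V : finType) (m : V -> V -> nat) (n : nat)
  (S : 'I_n -> 'I_n -> {set V}) : Prop :=
  (forall i j, is_clique m (S i j)) /\
  (forall x y, x != y ->
     #|[set ij : 'I_n * 'I_n | (x \in S ij.1 ij.2) && (y \in S ij.1 ij.2)]| = m x y).

Section Sets.
Variables (V : finType) (n : nat) (v : 'I_n -> V) (S : 'I_n -> 'I_n -> {set V}).
Definition Srow (i : 'I_n) : {set V} := \bigcup_(p < n) S i p.
Definition Scol (j : 'I_n) : {set V} := \bigcup_(q < n) S q j.
Definition Tplus (i : 'I_n) : {set V} :=
  [set v b | b in [set b : 'I_n | [exists a : 'I_n, v i \in S a b]]].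
Definition Tminus (j : 'I_n) : {set V} :=
  [set v a | a in [set a : 'I_n | [exists b : 'I_n, v j \in S a b]]].
Definition Aset (i : 'I_n) : {set V} := Srow i :|: Tplus i.
Definition Bset (j : 'I_n) : {set V} := Scol j :|: Tminus j.
End Sets.

(* Main.v *)
Require Import Defs.
From mathcomp Require Import all_boot.

Set Implicit Arguments. Unset Strict Implicit. Unset Printing Implicit Defensive.

Lemma card_pre (V : finType) n (v : 'I_n -> V) (bv : bijective v) (A : {set V}) :
  #|[set a | v a \in A]| = #|A|.
Proof.
have inj := bij_inj bv.
rewrite -(card_imset _ inj).
suff -> : v @: [set a | v a \in A] = A by [].
apply/setP => x.
apply/imsetP/idP.
- by case=> a; rewrite inE => Ha ->.
- move=> Hx; case: bv => w vK wK; exists (w x); rewrite ?inE wK //.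
Qed.

Lemma cardX_pre (V : finType) n (v : 'I_n -> V) (bv : bijective v) (A B : {set V}) :
  #|[set ij : 'I_n * 'I_n | (v ij.1 \in A) && (v ij.2 \in B)]| = #|A| * #|B|.
Proof.
rewrite -(card_pre bv A) -(card_pre bv B) -cardsX.
suff -> : [set ij : 'I_n * 'I_n | (v ij.1 \in A) && (v ij.2 \in B)] =
  setX [set a | v a \in A] [set b | v b \in B] by [].
by apply/setP => -[a b]; rewrite !inE.
Qed.

Section Back.
Variables (V : finType) (n : nat) (v : 'I_n -> V) (S : 'I_n -> 'I_n -> {set V}).
Hypothesis vinj : injective v.

Lemma memSrow i x : (x \in Srow S i) = [exists p, x \in S i p].
Proof. by apply/bigcupP/existsP => [[p _ H]|[p H]]; exists p. Qed.
Lemma memScol j x : (x \in Scol S j) = [exists q, x \in S q j].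
Proof. by apply/bigcupP/existsP => [[p _ H]|[p H]]; exists p. Qed.
Lemma memTplus i j : (v j \in Tplus v S i) = [exists a, v i \in S a j].
Proof.
apply/imsetP/existsP => [[b]|[a Ha]].
- by rewrite inE => /existsP [a Ha] /vinj ->; exists a.
- by exists j => //; rewrite inE; apply/existsP; exists a.
Qed.
Lemma memTminus i j : (v i \in Tminus v S j) = [exists b, v j \in S i b].
Proof.
apply/imsetP/existsP => [[a]|[b Hb]].
- by rewrite inE => /existsP [b Hb] /vinj ->; exists b.
- by exists i => //; rewrite inE; apply/existsP; exists b.
Qed.
Lemma symAB i j : (v j \in Aset v S i) = (v i \in Bset v S j).
Proof.
by rewrite /Aset /Bset !inE memSrow memScol memTplus memTminus orbC.
Qed.
Lemma SsubA a b x : x \in S a b -> x \in Aset v S a.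
Proof. by move=> H; rewrite /Aset inE memSrow; apply/orP; left; apply/existsP; exists b. Qed.
Lemma SsubB a b x : x \in S a b -> x \in Bset v S b.
Proof. by move=> H; rewrite /Bset inE memScol; apply/orP; left; apply/existsP; exists a. Qed.
End Back.

Theorem theorem3 (V : finType) (n : nat) (m : V -> V -> nat)
  (hn : #|V| = n) (msym : forall x y, m x y = m y x) :
  is_dcm_of_reflexive_digraph m <->
  exists (v : 'I_n -> V) (S : 'I_n -> 'I_n -> {set V}),
    [/\ bijective v,
        double_indexed_ecp m S,
        (forall i j : 'I_n, 2 <= #|Aset v S i :&: Bset v S j| ->
            Aset v S i :&: Bset v S j = S i j) &
        (forall i : 'I_n, v i \in Srow S i :|: Scol S i)].
Proof.
split.
- move=> [D [Dr Dm]].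
  have [v bv] : exists v : 'I_n -> V, bijective v.
    by subst n; exists enum_val; exact: (Bijective enum_valK enum_rankK).
  case: (bv) => w vK wK.
  pose S := fun i j : 'I_n => [set x | D (v i) x && D x (v j)].
  have Aeq : forall i, Aset v S i = outN D (v i).
    move=> i; apply/setP => x; rewrite /Aset inE /outN inE.
    apply/idP/idP.
    + case/orP => [/bigcupP [p _]|/imsetP [b]].
      * by rewrite /S inE => /andP [].
      * by rewrite inE => /existsP [a]; rewrite /S inE => /andP [_ H] ->.
    + move=> H; apply/orP; left; apply/bigcupP; exists (w x) => //.
      by rewrite /S inE wK H Dr.
  have Beq : forall j, Bset v S j = inN D (v j).
    move=> j; apply/setP => x; rewrite /Bset inE /inN inE.
    apply/idP/idP.
    + case/orP => [/bigcupP [p _]|/imsetP [a]].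
      * by rewrite /S inE => /andP [].
      * by rewrite inE => /existsP [b]; rewrite /S inE => /andP [H _] ->.
    + move=> H; apply/orP; left; apply/bigcupP; exists (w x) => //.
      by rewrite /S inE wK H Dr.
  exists v, S; split => //.
  + split.
    * move=> i j x y; rewrite /S !inE => /andP [h1 h2] /andP [h3 h4] xy.
      rewrite Dm // muln_gt0; apply/andP; split; apply/card_gt0P.
      - by exists (v j); rewrite !inE h2 h4.
      - by exists (v i); rewrite !inE h1 h3.
    * move=> x y xy; rewrite Dm // mulnC -(cardX_pre bv); apply: eq_card => -[a b]; rewrite !inE /=.
      by case: (D (v a) x) (D x (v b)) (D (v a) y) (D y (v b)) => [] [] [] [].
  + by move=> i j _; rewrite Aeq Beq; apply/setP => x; rewrite /S !inE.
  + move=> i; rewrite !inE; apply/orP; left; apply/bigcupP; exists i => //.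
    by rewrite /S inE Dr.
- move=> [v [S [bv [Scl Scnt] HI HIII]]].
  case: (bv) => w vK wK.
  have vinj := bij_inj bv.
  have reflA : forall i, v i \in Aset v S i.
    move=> i; move: (HIII i); rewrite inE => /orP [H|H]; rewrite /Aset inE.
    + by rewrite H.
    + apply/orP; right; rewrite memTplus //.
      by move: H; rewrite memScol.
  pose D : rel V := fun x y => y \in Aset v S (w x).
  have outD : forall i, outN D (v i) = Aset v S i.
    by move=> i; apply/setP => z; rewrite /outN inE /D /= vK.
  have inD : forall j, inN D (v j) = Bset v S j.
    by move=> j; apply/setP => z; rewrite /inN inE /D /= (symAB S vinj) wK.
  exists D; split.
  + by move=> x; rewrite /D /=; have := reflA (w x); rewrite wK.
  + move=> x y; rewrite -(wK x) -(wK y); move: (w x) (w y) => i j ij.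
    rewrite !outD !inD -(Scnt _ _ ij) mulnC -(cardX_pre bv); apply: eq_card => -[a b]; rewrite in_set /= in_set /= !in_setI.
    rewrite -(symAB S vinj a i) -(symAB S vinj a j) (symAB S vinj i b) (symAB S vinj j b).
    apply/idP/idP.
    * case/andP => h1 h2.
      by rewrite (SsubA v h1) (SsubA v h2) (SsubB v h1) (SsubB v h2).
    * case/andP => /andP [h1 h2] /andP [h3 h4].
      have c2 : 2 <= #|Aset v S a :&: Bset v S b|.
        have := subset_leq_card (A := [set v i; v j]) (B := Aset v S a :&: Bset v S b).
        rewrite cards2 ij; apply; apply/subsetP => z /set2P [] ->; by rewrite in_setI ?h1 ?h2 ?h3 ?h4.
      by rewrite -(HI a b c2) !in_setI h1 h2 h3 h4.
Qed.
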